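(* Let $L(t)=(l_{ij}(t))_{i,j=1}^m$ satisfy Assumption A4 and $\sigma>0$. Suppose there exist $\delta>0$ and $T>0$ such that for every interval $I=[t_1,t_1+T]\subset[0,\infty)$ the graph $G(I,\delta)$ has a spanning tree. Then there exist $\delta_1>0$ and $T_1>0$ such that $\eta(V(t_0+T_1,t_0))>\delta_1$ for all $t_0\ge0$.
   Context: Assumption A4: (a) $l_{ij}(t)\ge0$ for $i\neq j$ are measurable and $l_{ii}(t)=-\sum_{j\ne i}l_{ij}(t)$; (b) there is $M_1>0$ with $|l_{ij}(t)|\le M_1$ for all $i,j,t$. $V(t,t_0)$ is the solution matrix (identity at $t_0$) of $\dot u=\sigma L(t)u$, $u\in\mathbb R^m$ (it is a stochastic matrix). For a stochastic matrix $V=(v_{ij})$ with rows $v_i$, $\eta(V)=\min_{i,j}\sum_{k=1}^m\min\{v_{ik},v_{jk}\}$; $V$ is called $\delta_1$-scrambling if $\eta(V)>\delta_1$. For a compact interval $I=[t_1,t_2]$ and $\delta>0$, $G(I,\delta)$ is the directed graph on $\{1,\dots,m\}$ with an edge from $j$ to $i$ iff $\int_{t_1}^{t_2}l_{ij}(\tau)d\tau>\delta$. A directed graph has a spanning tree if some vertex reaches every other vertex along directed edges. *)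

(* Defs.v *)
From HB Require Import structures.
From mathcomp Require Import all_boot all_order all_algebra.
From mathcomp Require Import all_classical all_reals all_analysis.
Set Implicit Arguments. Unset Strict Implicit. Unset Printing Implicit Defensive.
Import Order.TTheory GRing.Theory Num.Theory.
Local Open Scope classical_set_scope.
Local Open Scope ring_scope.

Definition assumptionA4 (R : realType) (m : nat) (L : R -> 'M[R]_m) : Prop :=
  (forall i j : 'I_m, measurable_fun setT (fun t => L t i j)) /\
  (forall t (i j : 'I_m), i != j -> 0 <= L t i j) /\
  (forall t (i : 'I_m), L t i i = - \sum_(j < m | j != i) L t i j) /\
  (exists M1 : R, 0 < M1 /\ forall t (i j : 'I_m), `|L t i j| <= M1).

(* V is the (Caratheodory) solution matrix of du/dt = sigma L(t) u with
   V(t0,t0) = I:  for t >= t0,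
   V(t,t0) = I + int_{t0}^{t} sigma L(s) V(s,t0) ds  (entrywise, with integrable
   integrand). *)
Definition solution_matrix (R : realType) (m : nat) (sigma : R)
  (L : R -> 'M[R]_m) (V : R -> R -> 'M[R]_m) : Prop :=
  forall t0 t : R, t0 <= t -> forall i j : 'I_m,
    (lebesgue_measure).-integrable `[t0, t]
       (fun s => (sigma * \sum_(k < m) L s i k * V s t0 k j)%:E) /\
    V t t0 i j = (i == j)%:R +
       Rintegral lebesgue_measure `[t0, t]
         (fun s => sigma * \sum_(k < m) L s i k * V s t0 k j).

(* eta(V) = min_{i,j} sum_k min(v_ik, v_jk).  The neutral element 1 of the
   iterated min is harmless for stochastic matrices (each such sum is <= 1). *)
Definition eta (R : realType) (m : nat) (V : 'M[R]_m) : R :=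
  \big[Num.min/1]_(i < m) \big[Num.min/1]_(j < m)
     \sum_(k < m) Num.min (V i k) (V j k).

Definition G_edge (R : realType) (m : nat) (L : R -> 'M[R]_m) (t1 t2 delta : R)
  : rel 'I_m :=
  fun j i => delta < Rintegral lebesgue_measure `[t1, t2] (fun s => L s i j).

Definition has_spanning_tree (m : nat) (e : rel 'I_m) : Prop :=
  exists r : 'I_m, forall i : 'I_m, connect e r i.

(* Main.v *)
Require Import Defs.
From mathcomp Require Import all_boot all_order all_algebra.
From mathcomp Require Import all_classical all_reals all_analysis.
From mathcomp Require Import ring lra zify measurable_realfun.
Import Order.TTheory GRing.Theory Num.Theory.
Import numFieldNormedType.Exports.
Local Open Scope classical_set_scope.
Local Open Scope ring_scope.

Set Implicit Arguments. Unset Strict Implicit. Unset Printing Implicit Defensive.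

Section Helpers.
Variable R : realType.
Notation mu := (@lebesgue_measure R).
Local Notation Rint D f := (mu.-integrable D (EFin \o f)).

Lemma mu_itv (a b : R) : a <= b -> mu `[a, b] = (b - a)%:E.
Proof.
move=> ab; rewrite lebesgue_measure_itv /= lte_fin.
case: ltP => [_|ba]; first by [].
have -> : a = b by apply/le_anti; rewrite ab ba.
by rewrite subrr.
Qed.

Lemma mitv (a b : R) : measurable `[a, b].
Proof. exact: measurable_itv. Qed.

Lemma Rint_bnd (a b : R) (f : R -> R) (B : R) : measurable_fun setT f -> (forall s, `|f s| <= B) ->
  Rint `[a, b] f.
Proof.
move=> mf fB; apply: measurable_bounded_integrable.
- exact: mitv.
- rewrite /= lebesgue_measure_itv; case: ifP => // _; exact: ltry.
- exact: measurable_funS mf.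
- exists B; split; first exact: num_real.
  by move=> x Bx y _; apply: (le_trans (fB y)); rewrite ltW.
Qed.

Lemma Rint_cst (a b c : R) : Rint `[a, b] (fun _ => c).
Proof. by apply: (@Rint_bnd _ _ _ `|c|). Qed.

Lemma Rint_Z (a b : R) f c : Rint `[a, b] f -> Rint `[a, b] (fun s => c * f s).
Proof.
move=> h.
have h2 : mu.-integrable `[a,b] (fun x => c%:E * (f x)%:E)%E by apply: (integrableZl _ c h).
by apply: (eq_integrable _ _ _ _ h2) => // x _ /=; rewrite EFinM.
Qed.

Lemma Rint_D (a b : R) f g : Rint `[a, b] f -> Rint `[a, b] g -> Rint `[a, b] (fun s => f s + g s).
Proof. move=> hf hg; apply: (integrableD _ hf hg) => //. Qed.

Lemma Rint_B (a b : R) f g : Rint `[a, b] f -> Rint `[a, b] g -> Rint `[a, b] (fun s => f s - g s).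
Proof. move=> hf hg; apply: (integrableB _ hf hg) => //. Qed.

Lemma Rint_S (a b x y : R) f : a <= x -> y <= b -> Rint `[a, b] f -> Rint `[x, y] f.
Proof.
move=> ax yb; apply: integrableS; try exact: mitv.
by apply: subset_itv; rewrite bnd_simp.
Qed.

Lemma Rint_sum (a b : R) (I : eqType) (s : seq I) (f : I -> R -> R) :
  (forall k, Rint `[a, b] (f k)) ->
  Rint `[a, b] (fun x => \sum_(k <- s) f k x) /\
  \int[mu]_(x in `[a, b]) (\sum_(k <- s) f k x) = \sum_(k <- s) \int[mu]_(x in `[a, b]) f k x.
Proof.
move=> hf; elim: s => [|k s [ih1 ih2]].
  have -> : (fun x => \sum_(k <- [::]) f k x) = (fun _ => 0).
    by apply/funext => x; rewrite big_nil.
  rewrite big_nil; split; first exact: Rint_cst.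
  by rewrite /Rintegral integral0.
have -> : (fun x => \sum_(j <- k :: s) f j x) = (fun x => f k x + \sum_(j <- s) f j x).
  by apply/funext => x; rewrite big_cons.
split; first exact: Rint_D.
by rewrite big_cons -ih2 RintegralD.
Qed.

Lemma Rint_split (a x b : R) f : a <= x -> x <= b -> Rint `[a, b] f ->
  \int[mu]_(s in `[a, b]) f s = \int[mu]_(s in `[a, x]) f s + \int[mu]_(s in `[x, b]) f s.
Proof.
move=> ax xb hf.
have := @Rintegral_itvB R f (BLeft a) (BRight b) x hf.
rewrite !bnd_simp => /(_ ax xb) h.
rewrite -(@Rintegral_itv_obnd_cbnd R x (BRight b) f); last first.
  apply: integrableS hf => //.
  by apply: subset_itv; rewrite bnd_simp.
by rewrite -h addrC subrK.
Qed.

Lemma Rint_cst_int (a b c : R) : a <= b -> \int[mu]_(s in `[a, b]) c = c * (b - a).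
Proof.
move=> ab; rewrite Rintegral_cst // /= lebesgue_measure_itv /= lte_fin.
case: ltP => [_|ba] //=.
have -> : a = b by apply/le_anti; rewrite ab ba.
by rewrite subrr mulr0.
Qed.

Lemma Rint_pt (a : R) f : \int[mu]_(s in `[a, a]) f s = 0.
Proof. by rewrite set_itv1 Rintegral_set1. Qed.

End Helpers.

Section Arith.
Variable R : realType.

Lemma bernoulli (x : R) (q : nat) : 0 <= x -> x <= 1 -> 1 - q%:R * x <= (1 - x) ^+ q.
Proof.
move=> x0 x1; elim: q => [|q ih]; first by rewrite expr0 mul0r subr0.
rewrite exprS.
have h0 : 0 <= (1 - x) ^+ q by rewrite exprn_ge0 // subr_ge0.
have h1 : (1 - x) * (1 - q%:R * x) <= (1 - x) * (1 - x) ^+ q by rewrite ler_wpM2l // subr_ge0.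
have h2 : 0 <= q%:R * x * x by rewrite !mulr_ge0.
rewrite -natr1 (le_trans _ h1) //.
have -> : (1 - x) * (1 - q%:R * x) = 1 - (q%:R + 1) * x + q%:R * x * x.
  by ring.
lra.
Qed.

Lemma limit_ge (B x y : R) (N0 : nat) : 0 <= B ->
  (forall n : nat, (N0 <= n)%N -> (0 < n)%N -> y - B / n%:R <= x) -> y <= x.
Proof.
move=> B0 h; rewrite leNgt; apply/negP => xy.
have yx0 : 0 < y - x by rewrite subr_gt0.
set n := maxn N0 (Num.Def.archi_bound (B / (y - x))).+1.
have n0 : (0 < n)%N by rewrite /n leq_max ltn0Sn orbT.
have := h n (leq_maxl _ _) n0.
have hb := @archi_boundP _ (B / (y - x)) (divr_ge0 B0 (ltW yx0)).
have hn : B / (y - x) < n%:R.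
  apply: (lt_le_trans hb); rewrite ler_nat /n leq_max; apply/orP; right; exact: leqnSn.
have np : 0 < n%:R :> R by rewrite ltr0n.
have hB : B / n%:R < y - x.
  rewrite ltr_pdivrMr //; rewrite ltr_pdivrMr // in hn; by rewrite mulrC.
lra.
Qed.

Lemma step_pos (m : nat) (i : 'I_m) (u x : 'I_m -> R) (e B : R) :
  0 <= e -> (forall k, - e <= u k) -> (forall k, k != i -> 0 <= x k) ->
  0 <= 1 + x i -> \sum_(k < m) x k <= B ->
  - (e * (1 + B)) <= u i + \sum_(k < m) u k * x k.
Proof.
move=> e0 ue x0 xi xB.
have h1 : \sum_(k < m) (- e) * x k <= \sum_(k < m | k != i) u k * x k + (- e) * x i.
  rewrite (bigD1 i) //= addrC lerD2r.
  by apply: ler_sum => k ki; rewrite ler_wpM2r // x0.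
rewrite (bigD1 i) //=.
have h2 : - e * (1 + x i) <= u i * (1 + x i) by rewrite ler_wpM2r.
rewrite -mulr_sumr in h1.
have h3 : - e * B <= - e * \sum_(k < m) x k by rewrite ler_wnM2l // oppr_le0.
have -> : u i + (u i * x i + \sum_(k < m | k != i) u k * x k) =
   u i * (1 + x i) + \sum_(k < m | k != i) u k * x k by ring.
lra.
Qed.

Lemma step_lb (m : nat) (i j : 'I_m) (u x : 'I_m -> R) (c w : R) :
  (forall k, 0 <= u k) -> (forall k, k != i -> 0 <= x k) -> w <= 1 + x i ->
  0 <= c -> (c = 0 \/ (j != i /\ c <= u j)) ->
  w * u i + c * x j <= u i + \sum_(k < m) u k * x k.
Proof.
move=> u0 x0 wx c0 hc.
rewrite (bigD1 i) //=.
have h1 : w * u i <= u i * (1 + x i) by rewrite mulrC ler_wpM2l.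
have h2 : c * x j <= \sum_(k < m | k != i) u k * x k.
  case: hc => [->|[ji cu]]; first by rewrite mul0r sumr_ge0 // => k ki; rewrite mulr_ge0 // x0.
  rewrite (bigD1 j) //=.
  have : c * x j <= u j * x j by rewrite ler_wpM2r // x0.
  have : 0 <= \sum_(k < m | (k != i) && (k != j)) u k * x k.
    by rewrite sumr_ge0 // => k /andP[ki _]; rewrite mulr_ge0 // x0.
  lra.
have -> : u i + (u i * x i + \sum_(k < m | k != i) u k * x k) =
   u i * (1 + x i) + \sum_(k < m | k != i) u k * x k by ring.
lra.
Qed.

End Arith.

Section Analytic.
Variables (R : realType) (m : nat) (a : R -> 'I_m -> 'I_m -> R) (u : R -> 'I_m -> R) (t0 K : R).
Notation mu := (@lebesgue_measure R).
Local Notation Rint D f := (mu.-integrable D (EFin \o f)).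
Hypothesis Hmeas : forall i k, measurable_fun setT (fun s => a s i k).
Hypothesis Hoff : forall s i k, i != k -> 0 <= a s i k.
Hypothesis Hbnd : forall s i k, `|a s i k| <= K.
Hypothesis K0 : 0 < K.
Local Notation g i s := (\sum_(k < m) a s i k * u s k).
Hypothesis Hsol : forall t, t0 <= t -> forall i,
  Rint `[t0, t] (fun s => g i s) /\ u t i = u t0 i + \int[mu]_(s in `[t0, t]) g i s.

Lemma a_int i k (x y : R) : Rint `[x, y] (fun s => a s i k).
Proof. have := Rint_bnd x y (Hmeas i k) (fun s => Hbnd s i k). exact. Qed.

Lemma incr i (tau t : R) : t0 <= tau -> tau <= t ->
  Rint `[tau, t] (fun s => g i s) /\ u t i - u tau i = \int[mu]_(s in `[tau, t]) g i s.
Proof.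
move=> h1 h2; have [I1 E1] := Hsol (le_trans h1 h2) i.
have [_ E2] := Hsol h1 i.
split; first exact: Rint_S h1 (lexx t) I1.
rewrite E1 E2 (Rint_split h1 h2 I1); ring.
Qed.


Lemma ubound (tE : R) : t0 <= tE -> exists M, 0 <= M /\
  forall s k, t0 <= s -> s <= tE -> `|u s k| <= M.
Proof.
move=> hE.
have Ig k : Rint `[t0, tE] (fun s => `|g k s|).
  by have [I _] := Hsol hE k; exact: integrable_norm.
have ge k : 0 <= `|u t0 k| + \int[mu]_(s in `[t0, tE]) `|g k s|.
  by rewrite addr_ge0 // Rintegral_ge0.
exists (\sum_(k < m) (`|u t0 k| + \int[mu]_(s in `[t0, tE]) `|g k s|)).
split; first by rewrite sumr_ge0.
move=> s k h1 h2.
have [I E] := Hsol h1 k.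
rewrite (bigD1 k) //= E.
have s1 : `|\int[mu]_(x in `[t0, s]) g k x| <= \int[mu]_(x in `[t0, s]) `|g k x|.
  exact: le_normr_Rintegral.
have s2 : \int[mu]_(x in `[t0, s]) `|g k x| <= \int[mu]_(x in `[t0, tE]) `|g k x|.
  rewrite (Rint_split h1 h2 (Ig k)) lerDl Rintegral_ge0 //.
have s3 : 0 <= \sum_(i < m | i != k) (`|u t0 i| + \int[mu]_(s in `[t0, tE]) `|g i s|).
  by rewrite sumr_ge0.
apply: (le_trans (ler_normD _ _)); rewrite -addrA lerD2l.
by apply: (le_trans s1); apply: (le_trans s2); rewrite lerDl.
Qed.

Lemma gbound (M tE : R) : (forall s k, t0 <= s -> s <= tE -> `|u s k| <= M) ->
  forall s i, t0 <= s -> s <= tE -> `|g i s| <= m%:R * (K * M).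
Proof.
move=> hM s i h1 h2.
rewrite (le_trans (ler_norm_sum _ _ _)) //.
have -> : m%:R * (K * M) = \sum_(k < m) (K * M) by rewrite sumr_const card_ord mulr_natl.
apply: ler_sum => k _; rewrite normrM ler_pM //.
exact: hM.
Qed.


Lemma onestep (M tE tau h : R) i : (forall s k, t0 <= s -> s <= tE -> `|u s k| <= M) ->
  0 <= M -> t0 <= tau -> 0 <= h -> tau + h <= tE ->
  u tau i + \sum_(k < m) u tau k * \int[mu]_(s in `[tau, tau + h]) a s i k
   - m%:R * K * (m%:R * (K * M)) * (h * h) <= u (tau + h) i.
Proof.
move=> hM M0 h1 h0 h2.
have th : tau <= tau + h by rewrite lerDl.
have tauE : tau <= tE := le_trans th h2.
set Q := m%:R * (K * M).
have Q0 : 0 <= Q by rewrite mulr_ge0 // mulr_ge0 // ltW.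
have dk : forall s k, tau <= s -> s <= tau + h -> `|u s k - u tau k| <= Q * h.
  move=> s k s1 s2.
  have [I E] := incr k h1 s1.
  rewrite E; apply: (le_trans (le_normr_Rintegral _ _)) => //.
  apply: (@le_trans _ _ (\int[mu]_(x in `[tau, s]) Q)).
    apply: le_Rintegral => //; first exact: integrable_norm.
      exact: Rint_cst.
    move=> x; rewrite /= in_itv /= => /andP[x1 x2].
    apply: (gbound hM); first exact: le_trans h1 x1.
    exact: le_trans x2 (le_trans s2 h2).
  rewrite Rint_cst_int // ler_wpM2l // lerBlDl.
  exact: (le_trans s2); rewrite addrC.
have pw : forall x, tau <= x -> x <= tau + h ->
    \sum_(k < m) u tau k * a x i k - m%:R * K * (Q * h) <= g i x.
  move=> x x1 x2.
  have -> : g i x = \sum_(k < m) u tau k * a x i k + \sum_(k < m) a x i k * (u x k - u tau k).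
    by rewrite -big_split /=; apply: eq_bigr => k _; ring.
  have : `|\sum_(k < m) a x i k * (u x k - u tau k)| <= m%:R * K * (Q * h).
    rewrite (le_trans (ler_norm_sum _ _ _)) //.
    have -> : m%:R * K * (Q * h) = \sum_(k < m) (K * (Q * h)).
      by rewrite sumr_const card_ord mulr_natl mulrnAl.
    apply: ler_sum => k _; rewrite normrM ler_pM //; exact: dk.
  move/lerNnormlW.
  lra.
have [Ig Eg] := incr i h1 th.
have Ia k : Rint `[tau, tau + h] (fun x => u tau k * a x i k) by exact: Rint_Z (a_int i k _ _).
have [IS ES] : Rint `[tau, tau + h] (fun x => \sum_(k < m) u tau k * a x i k) /\
   \int[mu]_(x in `[tau, tau + h]) (\sum_(k < m) u tau k * a x i k) =
   \sum_(k < m) \int[mu]_(x in `[tau, tau + h]) (u tau k * a x i k).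
  exact: (Rint_sum (index_enum 'I_m) Ia).
have IF : Rint `[tau, tau + h] (fun x => \sum_(k < m) u tau k * a x i k - m%:R * K * (Q * h)).
  by apply: Rint_B => //; exact: Rint_cst.
have le : \int[mu]_(x in `[tau, tau + h]) (\sum_(k < m) u tau k * a x i k - m%:R * K * (Q * h))
   <= \int[mu]_(x in `[tau, tau + h]) g i x.
  apply: le_Rintegral => // x; rewrite /= in_itv /= => /andP[x1 x2]; exact: pw.
rewrite RintegralB // in le; last exact: Rint_cst.
move: le; rewrite ES Rint_cst_int //.
have -> : \sum_(k < m) \int[mu]_(x in `[tau, tau + h]) (u tau k * a x i k) =
   \sum_(k < m) u tau k * \int[mu]_(s in `[tau, tau + h]) a s i k.
  by apply: eq_bigr => k _; rewrite RintegralZl //; exact: a_int.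
lra.
Qed.

Lemma x_bounds (tau h : R) i k : 0 <= h ->
  - (K * h) <= \int[mu]_(s in `[tau, tau + h]) a s i k <= K * h.
Proof.
move=> h0; have th : tau <= tau + h by rewrite lerDl.
have hc c : \int[mu]_(s in `[tau, tau + h]) c = c * h.
  by rewrite Rint_cst_int // addrC addKr.
apply/andP; split.
  rewrite -mulNr -hc; apply: le_Rintegral => //; first exact: Rint_cst.
    exact: a_int.
  by move=> x _; have := Hbnd x i k; rewrite ler_norml => /andP[].
rewrite -hc; apply: le_Rintegral => //; first exact: a_int.
  exact: Rint_cst.
by move=> x _; have := Hbnd x i k; rewrite ler_norml => /andP[].
Qed.

Lemma x_ge0 (tau h : R) i k : i != k -> 0 <= \int[mu]_(s in `[tau, tau + h]) a s i k.
Proof. by move=> ik; apply: Rintegral_ge0 => x _; exact: Hoff. Qed.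

Lemma x_sum (tau h : R) i : 0 <= h ->
  \sum_(k < m) \int[mu]_(s in `[tau, tau + h]) a s i k <= m%:R * K * h.
Proof.
move=> h0.
have -> : m%:R * K * h = \sum_(k < m) (K * h) by rewrite sumr_const card_ord mulr_natl mulrnAl.
apply: ler_sum => k _; by have /andP[] := x_bounds tau i k h0.
Qed.

Lemma grid_le (s h : R) (j n : nat) : 0 <= h -> (j <= n)%N -> s + j%:R * h <= s + n%:R * h.
Proof. by move=> h0 jn; rewrite lerD2l ler_wpM2r // ler_nat. Qed.

Lemma gridS (s h : R) (j : nat) : s + j%:R * h + h = s + j.+1%:R * h.
Proof. by rewrite -natr1 mulrDl mul1r addrA. Qed.

Lemma pos_u (Hu0 : forall k, 0 <= u t0 k) t : t0 <= t -> forall i, 0 <= u t i.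
Proof.
move=> ht i.
set D := t - t0.
have D0 : 0 <= D by rewrite subr_ge0.
have [M [M0 hM]] := ubound ht.
set E := m%:R * K * (m%:R * (K * M)).
have K0' := ltW K0.
have E0 : 0 <= E by rewrite !mulr_ge0.
set B := E * D * D * expR (m%:R * K * D).
have B0 : 0 <= B by rewrite !mulr_ge0 // expR_ge0.
apply: (@limit_ge _ B (u t i) 0 (Num.Def.archi_bound (K * D))) => // n nN n0.
have np : 0 < n%:R :> R by rewrite ltr0n.
set h := D / n%:R.
have h0 : 0 <= h by rewrite divr_ge0 // ltW.
have hn : n%:R * h = D by rewrite /h mulrC divfK // gt_eqF.
have Kh : K * h <= 1.
  have hb := @archi_boundP _ (K * D) (mulr_ge0 K0' D0).
  have : K * D <= n%:R.
    by apply: (le_trans (ltW hb)); rewrite ler_nat.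
  rewrite -hn mulrCA => H. rewrite -(ler_pM2l np) mulr1; lra.
set L := 1 + m%:R * K * h.
have L1 : 1 <= L by rewrite lerDl !mulr_ge0.
have claim : forall j, (j <= n)%N -> forall k,
    - (j%:R * E * (h * h) * L ^+ j) <= u (t0 + j%:R * h) k.
  elim => [_ k|j IH jn k].
    by rewrite !mul0r addr0 oppr0 Hu0.
  set tau := t0 + j%:R * h.
  have jn' : (j <= n)%N by apply: ltnW.
  have t1 : t0 <= tau by rewrite /tau lerDl mulr_ge0.
  have t2 : tau + h <= t.
    by rewrite /tau gridS (le_trans (grid_le _ h0 jn)) // hn /D addrC subrK.
  have O := onestep k hM M0 t1 h0 t2.
  rewrite -/E in O.
  rewrite -gridS -/tau.
  set e := j%:R * E * (h * h) * L ^+ j.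
  have e0 : 0 <= e by rewrite !mulr_ge0 // exprn_ge0 // (le_trans _ L1).
  have x0 : forall l, l != k -> 0 <= \int[mu]_(s in `[tau, tau + h]) a s k l.
    by move=> l lk; apply: x_ge0; rewrite eq_sym.
  have xb := x_bounds tau k k h0.
  have xk : 0 <= 1 + \int[mu]_(s in `[tau, tau + h]) a s k k.
    move: xb => /andP[xb _]; lra.
  have xs := x_sum tau k h0.
  have P := step_pos e0 (IH jn') x0 xk xs.
  rewrite -/tau in P.
  have eL : e * (1 + m%:R * K * h) = j%:R * E * (h * h) * L ^+ j.+1.
    by rewrite /e /L exprS; ring.
  have EL : E * (h * h) <= E * (h * h) * L ^+ j.+1.
    by rewrite ler_peMr ?mulr_ge0 // exprn_ege1.
  rewrite -natr1.
  lra.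
have := claim n (leqnn n) i.
have -> : t0 + n%:R * h = t by rewrite hn /D addrC subrK.
have e1 : n%:R * E * (h * h) * L ^+ n = (E * D * D / n%:R) * L ^+ n.
  by rewrite /h; field; rewrite gt_eqF.
have e2 : B / n%:R = (E * D * D / n%:R) * expR (m%:R * K * D) by rewrite /B mulrAC.
have e3 : L ^+ n <= expR (m%:R * K * D).
  have -> : m%:R * K * D = n%:R * (m%:R * K * h) by rewrite -hn; ring.
  rewrite expRM_natl lerXn2r // ?nnegrE ?expR_ge0 ?(le_trans _ L1) //.
  exact: expR_ge1Dx.
have e4 : (E * D * D / n%:R) * L ^+ n <= (E * D * D / n%:R) * expR (m%:R * K * D).
  by rewrite ler_wpM2l // divr_ge0 ?mulr_ge0 // ltW.
rewrite e1 -e2 in e4 *.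
lra.
Qed.

Lemma step_alg (w U0 U1 P Y c x E j : R) : 0 <= w -> w <= 1 -> 0 <= c * x -> w * P <= 1 -> 0 <= E -> 0 <= j ->
  w * U0 + c * x - E <= U1 -> P * Y - j * E <= U0 -> w * P * (Y + c * x) - (j + 1) * E <= U1.
Proof. move=> w0 w1 cx wP E0 j0 h1 h2.
have h3 : w * (P * Y - j * E) <= w * U0 by apply: ler_wpM2l.
have h4 : w * (j * E) <= j * E by rewrite ler_piMl ?mulr_ge0.
have h5 : w * P * (c * x) <= c * x by rewrite ler_piMl.
lra.
Qed.

Lemma lower (Hpos : forall t k, t0 <= t -> 0 <= u t k) (T : R) (p : nat) :
  (0 < p)%N -> 2 * K * T <= p%:R ->
  forall (s D c : R) (i j : 'I_m), t0 <= s -> 0 <= D -> D <= T -> 0 <= c ->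
  (c = 0 \/ (j != i /\ forall tau, s <= tau -> tau <= s + D -> c <= u tau j)) ->
  (1 / 2) ^+ p * (u s i + c * \int[mu]_(x in `[s, s + D]) a x i j) <= u (s + D) i.
Proof.
move=> p0 hKT s D c i j hs D0 DT c0 hc.
have K0' := ltW K0.
have sD : s <= s + D by rewrite lerDl.
have [M [M0 hM]] := ubound (le_trans hs sD).
set E := m%:R * K * (m%:R * (K * M)).
have E0 : 0 <= E by rewrite !mulr_ge0.
set Y := u s i + c * \int[mu]_(x in `[s, s + D]) a x i j.
have Y0 : 0 <= Y.
  rewrite addr_ge0 ?Hpos //; case: hc => [->|[ji _]]; first by rewrite mul0r.
  by rewrite mulr_ge0 // x_ge0 // eq_sym.
have pp : 0 < p%:R :> R by rewrite ltr0n.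
apply: (@limit_ge _ (E * D * D / p%:R) _ _ 1%N) => [|q _ q0].
  by rewrite divr_ge0 ?mulr_ge0 // ltW.
set n := (q * p)%N.
have qp : 0 < q%:R :> R by rewrite ltr0n.
have np : 0 < n%:R :> R by rewrite /n natrM mulr_gt0.
set h := D / n%:R.
have h0 : 0 <= h by rewrite divr_ge0 // ltW.
have hn : n%:R * h = D by rewrite /h mulrC divfK // gt_eqF.
have qKh : q%:R * (K * h) = K * D / p%:R.
  by rewrite /h /n natrM; field; rewrite !gt_eqF.
have KDp : K * D / p%:R <= 1 / 2.
  rewrite ler_pdivrMr //.
  have : K * D <= K * T by rewrite ler_wpM2l.
  lra.
have Kh0 : 0 <= K * h by rewrite mulr_ge0.
have Kh : K * h <= 1 / 2.
  apply: (le_trans _ KDp); rewrite -qKh ler_peMl //.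
  by rewrite (ler_nat _ 1 q).
set w := 1 - K * h.
have w0 : 0 <= w by rewrite /w; lra.
have w1 : w <= 1 by rewrite /w; lra.
have claim : forall j', (j' <= n)%N ->
    w ^+ j' * (u s i + c * \int[mu]_(x in `[s, s + j'%:R * h]) a x i j) - j'%:R * E * (h * h)
     <= u (s + j'%:R * h) i.
  elim => [_|j' IH jn].
    by rewrite !mul0r addr0 Rint_pt mulr0 addr0 expr0 mul1r subr0.
  have jn' : (j' <= n)%N by apply: ltnW.
  set tau := s + j'%:R * h.
  have t1 : s <= tau by rewrite /tau lerDl mulr_ge0.
  have t2 : tau + h <= s + D.
    by rewrite /tau gridS (le_trans (grid_le _ h0 jn)) // hn.
  have O := onestep i hM M0 (le_trans hs t1) h0 t2.
  rewrite -/E in O.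
  rewrite -gridS -/tau.
  set x := fun l => \int[mu]_(y in `[tau, tau + h]) a y i l.
  have x0 : forall l, l != i -> 0 <= x l.
    by move=> l li; apply: x_ge0; rewrite eq_sym.
  have xi : w <= 1 + x i.
    have /andP[xb _] := x_bounds tau i i h0; rewrite /w /x; lra.
  have hc' : c = 0 \/ (j != i /\ c <= u tau j).
    case: hc => [->|[ji hj]]; [by left | right; split => //].
    exact: hj t1 (le_trans (ler_wpDr h0 _) t2).
  have SL := step_lb (fun l => Hpos tau l (le_trans hs t1)) x0 xi c0 hc'.
  have IH' := IH jn'; rewrite -/tau in IH'.
  have spl : \int[mu]_(y in `[s, tau + h]) a y i j =
      \int[mu]_(y in `[s, tau]) a y i j + x j.
    by rewrite (Rint_split t1 (ler_wpDr h0 _) (a_int i j _ _)).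
  rewrite spl exprS -natr1.
  have cx : 0 <= c * x j.
    case: hc' => [->|[ji _]]; first by rewrite mul0r.
    by rewrite mulr_ge0 // x0.
  have wP : w * w ^+ j' <= 1 by rewrite -exprS exprn_ile1.
  have SA := @step_alg w (u tau i) (u (tau + h) i) (w ^+ j')
     (u s i + c * \int[mu]_(x in `[s, tau]) a x i j) c (x j) (E * (h * h)) j'%:R w0 w1 cx wP
     (mulr_ge0 E0 (mulr_ge0 h0 h0)) (ler0n _ _).
  rewrite /x /= in SL SA spl cx hc' *; clear x x0 xi.
  have H1 : w * u tau i + c * \int[mu]_(y in `[tau, tau + h]) a y i j - E * (h * h) <= u (tau + h) i.
    clear IH IH' jn jn' hc SA; lra.
  have H2 : w ^+ j' * (u s i + c * \int[mu]_(x in `[s, tau]) a x i j) - j'%:R * (E * (h * h)) <= u tau i.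
    clear IH jn jn' hc SA; lra.
  have := SA H1 H2.
  clear IH jn jn' hc; lra.
have := claim n (leqnn n); rewrite hn -/Y.
have e1 : n%:R * E * (h * h) = E * D * D / p%:R / q%:R.
  by rewrite /h /n natrM; field; rewrite !gt_eqF.
have wq : 1 / 2 <= w ^+ q.
  have Kh1 : K * h <= 1 by lra.
  have := bernoulli q Kh0 Kh1.
  rewrite -/w qKh; lra.
have wn : (1 / 2) ^+ p <= w ^+ n.
  rewrite /n exprM lerXn2r // nnegrE //; first exact: exprn_ge0.
have := ler_wpM2r Y0 wn.
rewrite e1; clear claim hc; lra.
Qed.

End Analytic.

Lemma crossing (m : nat) (e : rel 'I_m) (A : {set 'I_m}) r y :
  connect e r y -> r \in A -> y \notin A ->
  exists x z, [/\ e x z, x \in A & z \notin A].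
Proof.
move=> /connectP [p pth ->] rA; elim: p r pth rA => [|z p IH] r /=.
  by move=> _ ->.
move=> /andP[erz pth] rA.
case zA: (z \in A); first exact: IH pth zA.
by move=> _; exists r, z; rewrite zA.
Qed.

Lemma comb (m : nat) (S : nat -> 'I_m -> {set 'I_m}) (e : nat -> rel 'I_m) :
  (0 < m)%N ->
  (forall r, r \in S 0%N r) ->
  (forall k r, S k r \subset S k.+1 r) ->
  (forall k, exists rt, (forall i, connect (e k) rt i) /\
       (forall x y, e k x y -> x \in S k rt -> y \in S k.+1 rt)) ->
  exists r, forall i, i \in S (m * m)%N r.
Proof.
move=> m0 S0 Smono He.
have mono : forall k d r, S k r \subset S (k + d)%N r.
  move=> k d r; elim: d => [|d IH]; first by rewrite addn0.
  by rewrite addnS (fintype.subset_trans IH (Smono _ _)).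
have rin : forall k r, r \in S k r.
  by move=> k r; have := mono 0%N k r; rewrite add0n => /fintype.subsetP; apply; exact: S0.
set N := (m * m)%N.
case: (boolP [exists r, [forall i, i \in S N r]]).
  by move=> /existsP[r /forallP h]; exists r.
rewrite negb_exists => /forallP Hn.
have notfull : forall k r, (k <= N)%N -> exists y, y \notin S k r.
  move=> k r kN; have := Hn r; rewrite negb_forall => /existsP[y hy].
  exists y; apply: contra hy => yk.
  have := mono k (N - k)%N r; rewrite subnKC // => /fintype.subsetP; exact.
set Phi := fun k => (\sum_(r < m) #|S k r|)%N.
have grow : forall k, (k < N)%N -> (Phi k < Phi k.+1)%N.
  move=> k kN; have [rt [hc hs]] := He k.
  have [y yn] := notfull k rt (ltnW kN).
  have [x [z [exz xin zn]]] := crossing (hc y) (rin k rt) yn.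
  have prop : S k rt \proper S k.+1 rt.
    apply/fintype.properP; split; first exact: Smono.
    by exists z => //; exact: hs exz xin.
  rewrite /Phi (bigD1 rt) //= [X in (_ < X)%N](bigD1 rt) //=.
  rewrite -addSn leq_add //; first exact: proper_card.
  by apply: leq_sum => r _; apply: subset_leq_card.
have lowb : forall k, (k <= N)%N -> (k + m <= Phi k)%N.
  elim => [_|k IH kN].
    rewrite add0n /Phi; apply: (@leq_trans (\sum_(r < m) 1)%N).
      by rewrite sum1_card card_ord.
    by apply: leq_sum => r _; rewrite card_gt0; apply/set0Pn; exists r.
  have := grow k kN; have := IH (ltnW kN); lia.
have upb : (Phi N <= N)%N.
  rewrite /Phi /N; have -> : (m * m = \sum_(r < m) m)%N by rewrite sum_nat_const card_ord.
  apply: leq_sum => r _; rewrite -[X in (_ <= X)%N](card_ord m); exact: max_card.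
have := lowb N (leqnn N); lia.
Qed.

Unset Implicit Arguments.

Lemma eta_lb (R : realType) (m : nat) (V : 'M[R]_m) (x : R) (r : 'I_m) :
  x <= 1 -> (forall i k, 0 <= V i k) -> (forall i, x <= V i r) -> x <= eta V.
Proof.
move=> x1 V0 Vr; rewrite /eta.
elim/big_ind: _ => //; first by move=> y z hy hz; rewrite le_min hy hz.
move=> i _; elim/big_ind: _ => //; first by move=> y z hy hz; rewrite le_min hy hz.
move=> j _; rewrite (bigD1 r) //=.
have h1 : x <= Num.min (V i r) (V j r) by rewrite le_min !Vr.
have h2 : 0 <= \sum_(k < m | k != r) Num.min (V i k) (V j k).
  by rewrite sumr_ge0 // => k _; rewrite le_min !V0.
lra.
Qed.

Lemma fin_arith (R : realType) (c ck beta sigma delta IL V0 V1 : R) :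
  c * ck <= beta * beta * sigma * delta * ck ->
  beta * beta * sigma * ck * delta <= beta * beta * sigma * ck * IL ->
  0 <= beta * V0 -> beta * (V0 + beta * ck * (sigma * IL)) <= V1 -> c * ck <= V1.
Proof. move=> *; lra. Qed.

Theorem lemma9 (R : realType) (m : nat) (L : R -> 'M[R]_m) (sigma : R)
  (V : R -> R -> 'M[R]_m) :
  assumptionA4 L -> 0 < sigma -> solution_matrix sigma L V ->
  (exists delta T : R, 0 < delta /\ 0 < T /\
     forall t1 : R, 0 <= t1 -> has_spanning_tree (G_edge L t1 (t1 + T) delta)) ->
  exists delta1 T1 : R, 0 < delta1 /\ 0 < T1 /\
    forall t0 : R, 0 <= t0 -> delta1 < eta (V (t0 + T1) t0).
Proof.
move=> [Hmeas [Hoff [_ [M1 [M10 HM1]]]]] s0 Hsol [delta [T [d0 [T0 Hsp]]]].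
case: (posnP m) => [m0|mpos].
  exists (1 / 2), 1; split; [lra | split; [lra|]] => t0 _.
  by rewrite /eta; subst m; rewrite big_ord0; lra.
set K := sigma * M1.
have K0 : 0 < K by rewrite mulr_gt0.
set a := fun s (i k : 'I_m) => sigma * L s i k.
have aM : forall i k, measurable_fun setT (fun s => a s i k).
  by move=> i k; apply: measurable_funM => //; exact: Hmeas.
have aO : forall s i k, i != k -> 0 <= a s i k.
  by move=> s i k ik; rewrite mulr_ge0 ?Hoff // ltW.
have aB : forall s i k, `|a s i k| <= K.
  by move=> s i k; rewrite normrM gtr0_norm // ler_wpM2l // ltW.
set p := (Num.Def.archi_bound (2 * K * T)).+1.
have hp : (0 < p)%N by [].
have hKT : 2 * K * T <= p%:R.
  have h0 : 0 <= 2 * K * T by rewrite !mulr_ge0 // ltW.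
  have := archi_boundP h0.
  move/ltW/le_trans; apply; rewrite ler_nat; exact: leqnSn.
set beta := (1 / 2 : R) ^+ p.
have b0 : 0 < beta by rewrite exprn_gt0.
have b1 : beta <= 1.
  have h2 : 0 <= 1 / 2 :> R by lra.
  have h3 : 1 / 2 <= 1 :> R by lra.
  exact: exprn_ile1.
set c := Num.min beta (beta * beta * sigma * delta).
have bbsd : 0 < beta * beta * sigma * delta.
  apply: mulr_gt0 => //; apply: mulr_gt0 => //; exact: mulr_gt0.
have c0 : 0 < c by rewrite lt_min b0 bbsd.
have cb : c <= beta by rewrite ge_min lexx.
have cE : c <= beta * beta * sigma * delta by rewrite ge_min lexx orbT.
set N := (m * m)%N.
have cN0 : 0 < c ^+ N by rewrite exprn_gt0.
exists (c ^+ N / 2), (N%:R * T); split; first by rewrite divr_gt0.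
split; first by rewrite mulr_gt0 // ltr0n muln_gt0 mpos.
move=> t0 t00.
set u := fun r s (k : 'I_m) => V s t0 k r.
have V00 : forall i r, V t0 t0 i r = (i == r)%:R.
  by move=> i r; have [_ E] := Hsol t0 t0 (lexx t0) i r; rewrite E Rint_pt addr0.
have Hs : forall r t, t0 <= t -> forall i,
    lebesgue_measure.-integrable `[t0, t] (EFin \o (fun s => \sum_(k < m) a s i k * u r s k)) /\
    u r t i = u r t0 i + \int[lebesgue_measure]_(s in `[t0, t]) (\sum_(k < m) a s i k * u r s k).
  move=> r t ht i; have [I E] := Hsol t0 t ht i r.
  have fe : (fun s => sigma * \sum_(k < m) L s i k * V s t0 k r) =
            (fun s => \sum_(k < m) a s i k * u r s k).
    by apply/funext => s; rewrite /a /u mulr_sumr; apply: eq_bigr => k _; rewrite mulrA.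
  rewrite fe in E; split; first by rewrite -fe; exact: I.
  by rewrite /u /= E V00.
have Pos : forall r t k, t0 <= t -> 0 <= V t t0 k r.
  move=> r t k ht.
  have Hu0 : forall k, 0 <= u r t0 k by move=> l; rewrite /u V00 ler0n.
  exact: (pos_u aM aO aB K0 (Hs r) Hu0 ht).
have Low := fun r => lower aM aO aB K0 (Hs r) (fun t k h => Pos r t k h) hp hKT.
set tk := fun k : nat => t0 + k%:R * T.
have tk0 : forall k, t0 <= tk k by move=> k; rewrite /tk lerDl mulr_ge0 // ltW.
have tkS : forall k, tk k.+1 = tk k + T by move=> k; rewrite /tk -natr1 mulrDl mul1r addrA.
have tkpos : forall k, 0 <= tk k by move=> k; exact: le_trans t00 (tk0 k).
have ck : forall k, 0 <= c ^+ k by move=> k; rewrite exprn_ge0 // ltW.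
have persist : forall r k i, c ^+ k <= V (tk k) t0 i r -> c ^+ k.+1 <= V (tk k.+1) t0 i r.
  move=> r k i h.
  have := Low r (tk k) T 0 i i (tk0 k) (ltW T0) (lexx T) (lexx 0) (or_introl erefl).
  rewrite mul0r addr0 -tkS /u /= => H.
  rewrite exprS; apply: (le_trans _ H); exact: ler_pM (ltW c0) (ck k) cb h.
have window : forall r k x tau, c ^+ k <= V (tk k) t0 x r -> tk k <= tau -> tau <= tk k + T ->
    beta * c ^+ k <= V tau t0 x r.
  move=> r k x tau h h1 h2.
  have D0 : 0 <= tau - tk k by rewrite subr_ge0.
  have DT : tau - tk k <= T by lra.
  have := Low r (tk k) (tau - tk k) 0 x x (tk0 k) D0 DT (lexx 0) (or_introl erefl).
  rewrite mul0r addr0 addrC subrK /u /= => H.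
  apply: (le_trans _ H); rewrite ler_wpM2l // ltW //.
have edge : forall r k x y, delta < \int[lebesgue_measure]_(s in `[tk k, tk k + T]) L s y x ->
    c ^+ k <= V (tk k) t0 x r -> c ^+ k.+1 <= V (tk k.+1) t0 y r.
  move=> r k x y hd hx.
  case: (eqVneq x y) => [exy|nxy]; first by subst y; exact: persist.
  have bc : 0 <= beta * c ^+ k by rewrite mulr_ge0 // ltW.
  have := Low r (tk k) T (beta * c ^+ k) y x (tk0 k) (ltW T0) (lexx T) bc
    (or_intror (conj nxy (fun tau h1 h2 => window r k x tau hx h1 h2))).
  rewrite tkS /u /= -/beta.
  have IL : lebesgue_measure.-integrable `[tk k, tk k + T] (EFin \o (fun s => L s y x)).
    exact: (Rint_bnd _ _ (Hmeas y x) (fun s => HM1 s y x)).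
  have eI : \int[lebesgue_measure]_(s in `[tk k, tk k + T]) a s y x =
     sigma * \int[lebesgue_measure]_(s in `[tk k, tk k + T]) L s y x.
    by rewrite /a RintegralZl.
  rewrite eI => H.
  have F1 : c * c ^+ k <= beta * beta * sigma * delta * c ^+ k by apply: ler_wpM2r.
  have F2 : beta * beta * sigma * c ^+ k * delta <=
      beta * beta * sigma * c ^+ k * \int[lebesgue_measure]_(s in `[tk k, tk k + T]) L s y x.
    apply: ler_wpM2l; last exact: ltW hd.
    have b0p := ltW b0; have s0p := ltW s0.
    exact: (mulr_ge0 (mulr_ge0 (mulr_ge0 b0p b0p) s0p) (ck k)).
  have F3 : 0 <= beta * V (tk k) t0 y r by rewrite mulr_ge0 ?Pos // ltW.
  rewrite exprS; exact: fin_arith F1 F2 F3 H.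
set S := fun k r => finset (fun i : 'I_m => c ^+ k <= V (tk k) t0 i r).
set e := fun k => G_edge L (tk k) (tk k + T) delta.
have P1 : forall r, r \in S 0%N r.
  by move=> r; rewrite inE expr0 /tk mul0r addr0 V00 eqxx.
have P2 : forall k r, S k r \subset S k.+1 r.
  by move=> k r; apply/fintype.subsetP => i; rewrite !inE; exact: persist.
have P3 : forall k, exists rt, (forall i, connect (e k) rt i) /\
       (forall x y, e k x y -> x \in S k rt -> y \in S k.+1 rt).
  move=> k; have [rt hrt] := Hsp (tk k) (tkpos k).
  exists rt; split => // x y exy; rewrite !inE; exact: edge.
have [r hr] := comb mpos P1 P2 P3.
have c1 : c ^+ N <= 1 by rewrite exprn_ile1 // ?(ltW c0) // (le_trans cb b1).
have lt1 : c ^+ N / 2 < c ^+ N by rewrite ltr_pdivrMr // ltr_pMr //; lra.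
apply: (lt_le_trans lt1); apply: (@eta_lb R m _ _ r) => //.
- by move=> i k; apply: Pos; rewrite lerDl mulr_ge0 // ltW.
- by move=> i; have := hr i; rewrite inE.
Qed.
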